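(* Let $A,B,C$ be nonzero integers, $f(X)=AX+B+\frac{C}{X}$, and let $T$ be an indeterminate. Then, in $\mathbb{Q}(T)$, the triple \[(x,y,z)=\left(T,\ -\frac{(AT^2+BT+C)B}{(AT^2+(B+1)T+C)A},\ -\frac{(AT^2+(B+1)T+C)C}{BT}\right)\] satisfies $f(x)f(y)=f(z)$, as does the triple \[(x,y,z)=\left(T,\ -\frac{(AT^2+(B+1)T+C)C}{(AT^2+BT+C)B},\ -\frac{(AT^2+(B+1)T+C)C}{BT}\right).\] *)

(* Defs.v *)
From HB Require Import structures.
From mathcomp Require Import all_boot all_order all_algebra fraction.
Set Implicit Arguments. Unset Strict Implicit. Unset Printing Implicit Defensive.
Import Order.TTheory GRing.Theory Num.Theory.
Local Open Scope ring_scope.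

Definition QT := {fraction {poly rat}}.

Definition Tvar : QT := tofrac ('X : {poly rat}).

Definition fABC (A B C : int) (x : QT) : QT :=
  A%:~R * x + B%:~R + C%:~R / x.

(* Main.v *)
Require Import Defs.
From HB Require Import structures.
From mathcomp Require Import all_boot all_order all_algebra fraction.
From mathcomp Require Import ring.
Import Order.TTheory GRing.Theory Num.Theory.
Local Open Scope ring_scope.

Lemma gen_id (F : fieldType) (a b c T : F) : a != 0 -> b != 0 -> c != 0 -> T != 0 ->
  a * T ^+ 2 + b * T + c != 0 -> a * T ^+ 2 + (b + 1) * T + c != 0 ->
  let P0 := a * T ^+ 2 + b * T + c in
  let P1 := a * T ^+ 2 + (b + 1) * T + c in
  let z := - (P1 * c) / (b * T) in
  let f x := a * x + b + c / x in
  (f T * f (- (P0 * b) / (P1 * a)) = f z) /\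
  (f T * f (- (P1 * c) / (P0 * b)) = f z).
Proof.
move=> ha hb hc hT h0 h1 P0 P1 z f; rewrite /f /z /P0 /P1; split; field;
  repeat (apply/andP; split) => //; by rewrite oppr_eq0 mulf_neq0.
Qed.

Lemma intQT (k : int) : (k%:~R : QT) = tofrac ((k%:~R : rat)%:P).
Proof. by rewrite !rmorph_int. Qed.

Lemma intQT_neq0 (k : int) : k != 0 -> (k%:~R : QT) != 0.
Proof. by move=> hk; rewrite intQT tofrac_eq0 polyC_eq0 intr_eq0. Qed.

Lemma quad_neq0 (A B C : int) (d : rat) : A != 0 ->
  (A%:~R : QT) * Tvar ^+ 2 + ((B%:~R : QT) + tofrac d%:P) * Tvar + (C%:~R : QT) != 0.
Proof.
move=> hA.
have -> : (A%:~R : QT) * Tvar ^+ 2 + ((B%:~R : QT) + tofrac d%:P) * Tvar + (C%:~R : QT)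
  = tofrac ((A%:~R : rat)%:P * 'X^2 + ((B%:~R : rat) + d)%:P * 'X + (C%:~R:rat)%:P).
  by rewrite !tofracD !tofracM !intQT polyCD tofracD /Tvar expr2.
rewrite tofrac_eq0; apply/eqP => /(congr1 (fun p : {poly rat} => p`_2)).
rewrite !coefD !coefCM coefXn coefX coefC /= mulr1 mulr0 !addr0 => /eqP.
by rewrite coef0 intr_eq0 (negPf hA).
Qed.

Theorem mainTheorem5 (A B C : int) (hA : A != 0) (hB : B != 0) (hC : C != 0) :
  let T := Tvar in
  let a : QT := A%:~R in
  let b : QT := B%:~R in
  let c : QT := C%:~R in
  let P0 := a * T ^+ 2 + b * T + c in
  let P1 := a * T ^+ 2 + (b + 1) * T + c in
  let z := - (P1 * c) / (b * T) in
  (fABC A B C T * fABC A B C (- (P0 * b) / (P1 * a)) = fABC A B C z) /\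
  (fABC A B C T * fABC A B C (- (P1 * c) / (P0 * b)) = fABC A B C z).
Proof.
move=> T a b c P0 P1 z.
have hT : T != 0 by rewrite /T /Tvar tofrac_eq0 polyX_eq0.
have h0 : P0 != 0.
  by have := @quad_neq0 A B C 0 hA; rewrite !raddf0 addr0.
have h1 : P1 != 0.
  by have := @quad_neq0 A B C 1 hA; rewrite !rmorph1.
have := @gen_id _ a b c T (@intQT_neq0 A hA) (@intQT_neq0 B hB) (@intQT_neq0 C hC) hT h0 h1.
by rewrite /fABC /z /P0 /P1 /a /b /c /T.
Qed.
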